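(* Let $A\in\mathbb R^{n\times n}$ be symmetric ($n\ge3$) and let $z\in\mathbb C\setminus\mathbb R$ with $|z|\le10$. Suppose $$\|R_{A,12}(z)-m_0(z)\mathbf I_2\|\le\delta,$$ where $0\le\delta\le\frac12\inf\{|m_0(w)|:w\in\mathbb C\setminus[-2,2],\,|w|\le10\}$. Then there is an absolute constant $C>0$ such that for $k=1,2$, $$\Big|\mathbf e_k^\top R_A(z)\mathbf 1-m_0(z)\big(1-a_k^\top R_A^{(12)}(z)\mathbf 1_{n-2}\big)\Big|\le C\delta\big(1+\|R_A(z)\mathbf 1\|_\infty\big).$$
   Context: $R_A(z)=(A-z\mathbf I)^{-1}$; $R_{A,12}(z)\in\mathbb C^{2\times2}$ is the upper-left $2\times2$ submatrix of $R_A(z)$; $R_A^{(12)}(z)\in\mathbb C^{(n-2)\times(n-2)}$ is the resolvent of the $(n-2)\times(n-2)$ submatrix of $A$ obtained by deleting its first two rows and columns; $a_k^\top\in\mathbb R^{1\times(n-2)}$ is the $k$-th row of $A$ with its first two entries removed; $\mathbf 1,\mathbf 1_{n-2}$ are all-ones vectors; $\|v\|_\infty=\max_i|v_i|$ and $\|\cdot\|$ is the spectral norm. $m_0(z)=\frac{-z+\sqrt{z^2-4}}2$ is the Stieltjes transform of the semicircle law, defined for $z\notin[-2,2]$ with branch cut on $[-2,2]$ and $\sqrt{z^2-4}\sim z$ as $|z|\to\infty$. *)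

(* Defs.v *)
From HB Require Import structures.
From mathcomp Require Import all_boot all_order all_algebra.
From mathcomp Require Import complex.
From mathcomp Require Import all_classical all_reals.
Set Implicit Arguments. Unset Strict Implicit. Unset Printing Implicit Defensive.
Import Order.TTheory GRing.Theory Num.Theory.
Local Open Scope ring_scope.
Local Open Scope classical_set_scope.

Section Defs.
Variable R : realType.
Local Notation C := R[i].

Definition cabs (x : C) : R := Normc.normc x.

Definition vnorm2 (q : nat) (v : 'cV[C]_q) : R :=
  Num.sqrt (\sum_(i < q) (cabs (v i ord0)) ^+ 2).

Definition specnorm (p q : nat) (M : 'M[C]_(p, q)) : R :=
  sup [set r : R | exists v : 'cV[C]_q, vnorm2 v = 1 /\ r = vnorm2 (M *m v)].

Definition vnorminf (q : nat) (v : 'cV[C]_q) : R :=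
  \big[Num.max/0]_(i < q) cabs (v i ord0).

Definition resolvent (n : nat) (A : 'M[R]_n) (z : C) : 'M[C]_n :=
  invmx (map_mx (fun x : R => (x%:C)%C) A - z%:M).

(* principal square root (branch cut on the negative real axis) *)
Definition csqrt (x : C) : C := sqrtc x.

(* sqrt(z^2-4) with branch cut [-2,2] and sqrt(z^2-4) ~ z at infinity:
   sqrt(z-2) * sqrt(z+2) with principal square roots *)
Definition sqrt_z2m4 (z : C) : C := csqrt (z - 2%:R) * csqrt (z + 2%:R).

(* Stieltjes transform of the semicircle law *)
Definition m0 (z : C) : C := (- z + sqrt_z2m4 z) / 2%:R.

Definition in_seg22 (w : C) : Prop := complex.Im w = 0 /\ -2%:R <= complex.Re w <= 2%:R.

Definition m0_inf : R :=
  inf [set r : R | exists w : C, ~ in_seg22 w /\ cabs w <= 10%:R /\ r = cabs (m0 w)].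

Definition ones (q : nat) : 'cV[C]_q := const_mx 1.

End Defs.

(* Main.v *)
Require Import Defs.
From HB Require Import structures.
From mathcomp Require Import all_boot all_order all_algebra.
From mathcomp Require Import complex.
From mathcomp Require Import all_classical all_reals.
From mathcomp Require Import lra ring.
Import Order.TTheory GRing.Theory Num.Theory.
Set Implicit Arguments. Unset Strict Implicit.
Local Open Scope ring_scope.

Section H.
Variable R : realType.
Local Notation C := R[i].
Implicit Types x y : C.

Lemma cabsC x : (cabs x)%:C%C = `|x|. Proof. by []. Qed.
Lemma cabs_ge0 x : 0 <= cabs x. Proof. by case: x => a b; exact: sqrtr_ge0. Qed.
Lemma cabsM x y : cabs (x * y) = cabs x * cabs y. Proof. exact: Normc.normcM. Qed.
Lemma cabsD x y : cabs (x + y) <= cabs x + cabs y. Proof. exact: le_normcD. Qed.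
Lemma cabsN x : cabs (- x) = cabs x. Proof. exact: normcN. Qed.
Lemma cabs0 : cabs (0 : C) = 0. Proof. exact: Normc.normc0. Qed.
Lemma cabs_eq0 x : cabs x = 0 -> x = 0. Proof. exact: Normc.eq0_normc. Qed.
Lemma cabsB x y : cabs (x - y) <= cabs x + cabs y.
Proof. by rewrite -(cabsN y) cabsD. Qed.
Lemma cabs_subge x y : cabs x - cabs y <= cabs (x - y).
Proof. have := cabsD (x - y) y; rewrite subrK; lra. Qed.

Lemma vnorm2_ge0 q (v : 'cV[C]_q) : 0 <= vnorm2 v.
Proof. exact: sqrtr_ge0. Qed.

Lemma sum_sq_ge0 q (v : 'cV[C]_q) : 0 <= \sum_(i < q) cabs (v i ord0) ^+ 2.
Proof. by apply: sumr_ge0 => i _; rewrite sqr_ge0. Qed.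

Lemma cabs_le_vnorm2 q (v : 'cV[C]_q) i : cabs (v i ord0) <= vnorm2 v.
Proof.
rewrite /vnorm2 -(ger0_norm (cabs_ge0 (v i ord0))) -sqrtr_sqr ler_sqrt //.
rewrite (bigD1 i) //= lerDl; apply: sumr_ge0 => j _; exact: sqr_ge0.
exact: sum_sq_ge0.
Qed.

Lemma vnorm2Z q c (v : 'cV[C]_q) : vnorm2 (c *: v) = cabs c * vnorm2 v.
Proof.
rewrite /vnorm2.
under eq_bigr do rewrite mxE cabsM exprMn.
rewrite -mulr_sumr sqrtrM ?sqr_ge0 // sqrtr_sqr ger0_norm //; exact: cabs_ge0.
Qed.

Lemma vnorm2_eq0 q (v : 'cV[C]_q) : vnorm2 v = 0 -> v = 0.
Proof.
move=> h; apply/matrixP => i j; rewrite ord1 mxE; apply: cabs_eq0.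
have := @cabs_le_vnorm2 q v i; rewrite h => h1.
by apply/eqP; rewrite eq_le h1 cabs_ge0.
Qed.

Lemma vnorm2_2 (v : 'cV[C]_2) :
  vnorm2 v = Num.sqrt (cabs (v 0 0) ^+ 2 + cabs (v 1 0) ^+ 2).
Proof.
rewrite /vnorm2 !big_ord_recr big_ord0 /= add0r.
by congr (_ (cabs (v _ _) ^+ 2 + cabs (v _ _) ^+ 2)); apply/val_inj.
Qed.

Lemma vnorm2_le_max (v : 'cV[C]_2) M :
  cabs (v 0 0) <= M -> cabs (v 1 0) <= M -> vnorm2 v <= 3%:R / 2%:R * M.
Proof.
move=> h0 h1; rewrite vnorm2_2.
have g0 := cabs_ge0 (v 0 0); have g1 := cabs_ge0 (v 1 0).
have hM : 0 <= 3%:R / 2%:R * M by apply: mulr_ge0 => //; lra.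
rewrite -(ger0_norm hM) -sqrtr_sqr ler_sqrt; last by rewrite sqr_ge0.
have: cabs (v 0 0) ^+ 2 <= M ^+ 2 by rewrite ler_pXn2r // ?nnegrE //; lra.
have: cabs (v 1 0) ^+ 2 <= M ^+ 2 by rewrite ler_pXn2r // ?nnegrE //; lra.
rewrite !expr2 => a b; nra.
Qed.

Lemma vnorm2_le_sum (v : 'cV[C]_2) :
  vnorm2 v <= cabs (v 0 0) + cabs (v 1 0).
Proof.
rewrite vnorm2_2.
have g0 := cabs_ge0 (v 0 0); have g1 := cabs_ge0 (v 1 0).
have hM : 0 <= cabs (v 0 0) + cabs (v 1 0) by lra.
rewrite -(ger0_norm hM) -sqrtr_sqr ler_sqrt; last by rewrite sqr_ge0.
rewrite !expr2; nra.
Qed.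


Lemma cabs_real (r : R) : cabs (r%:C)%C = `|r|.
Proof. by rewrite /cabs /= expr0n /= addr0 sqrtr_sqr. Qed.

Lemma mulmx2E (E : 'M[C]_(2,2)) (u : 'cV[C]_2) i :
  (E *m u) i 0 = E i 0 * u 0 0 + E i 1 * u 1 0.
Proof.
rewrite mxE !big_ord_recr big_ord0 /= add0r.
by congr (E _ _ * u _ _ + E _ _ * u _ _); apply/val_inj.
Qed.

Lemma spec_bound (E : 'M[C]_(2,2)) d : specnorm E <= d ->
  forall u, vnorm2 (E *m u) <= d * vnorm2 u.
Proof.
move=> hE.
set S := [set r : R | exists v : 'cV[C]_2, vnorm2 v = 1 /\ r = vnorm2 (E *m v)]%classic.
have hub : has_ubound S.
  exists ((cabs (E 0 0) + cabs (E 0 1)) + (cabs (E 1 0) + cabs (E 1 1))).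
  move=> r [v [hv ->]].
  apply: le_trans (vnorm2_le_sum _) _.
  have b0 := cabs_le_vnorm2 v 0; have b1 := cabs_le_vnorm2 v 1.
  rewrite hv in b0 b1.
  have key : forall i, cabs ((E *m v) i 0) <= cabs (E i 0) + cabs (E i 1).
    move=> i; rewrite mulmx2E.
    apply: le_trans (cabsD _ _) _; rewrite !cabsM.
    have := cabs_ge0 (E i 0); have := cabs_ge0 (E i 1).
    have := cabs_ge0 (v 0 0); have := cabs_ge0 (v 1 0).
    move: b0 b1; rewrite /=; nra.
  exact: lerD (key 0) (key 1).
have hS : forall v, vnorm2 v = 1 -> vnorm2 (E *m v) <= d.
  move=> v hv; apply: le_trans hE; apply: ub_le_sup hub _ _.
  by exists v.
move=> u.
have [h0|hn] := eqVneq (vnorm2 u) 0.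
  rewrite (vnorm2_eq0 h0) mulmx0 -(scale0r (0 : 'cV[C]_2)) vnorm2Z cabs0 !mul0r mulr0.
  done.
have hp : 0 < vnorm2 u by rewrite lt_def hn vnorm2_ge0.
set c := (((vnorm2 u)^-1)%:C)%C.
have hc : cabs c = (vnorm2 u)^-1 by rewrite cabs_real ger0_norm // invr_ge0 ltW.
have := hS (c *: u); rewrite vnorm2Z hc mulVf // -scalemxAr vnorm2Z hc.
move=> /(_ erefl).
by rewrite -ler_pdivlMl ?invr_gt0 // invrK mulrC.
Qed.


Lemma m0_eq (z : C) : m0 z * (m0 z + z) = -1.
Proof.
have hs : sqrt_z2m4 z ^+ 2 = z ^+ 2 - 4%:R.
  rewrite /sqrt_z2m4 /csqrt exprMn !sqr_sqrtc.
  by rewrite -subr_sqr; congr (_ - _); rewrite expr2 -natrM.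
rewrite /m0; move: (sqrt_z2m4 z) hs => s hs.
have -> : (- z + s) / 2%:R * ((- z + s) / 2%:R + z) = (s ^+ 2 - z ^+ 2) / 4%:R.
  by field; rewrite ?pnatr_eq0.
rewrite hs; by field.
Qed.

Lemma m0_lb (z : C) : cabs z <= 10%:R -> 1 / 11%:R <= cabs (m0 z).
Proof.
move=> hz.
have h := congr1 (@cabs R) (m0_eq z).
have c1 : cabs (1:C) = 1 by exact: Normc.normc1.
rewrite cabsM cabsN c1 in h.
have := cabsD (m0 z) z; have := cabs_ge0 (m0 z); have := cabs_ge0 (m0 z + z).
move: h hz; set a := cabs (m0 z); set b := cabs (m0 z + z); set c := cabs z.
move=> h hz hb ha hab.
rewrite ler_pdivrMr //.
have : 1 <= a * (a + 10%:R) by rewrite -h; nra.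
nra.
Qed.


Lemma mapJM m n p (X : 'M[C]_(m,n)) (Y : 'M[C]_(n,p)) :
  map_mx (@conjc R) (X *m Y) = map_mx (@conjc R) X *m map_mx (@conjc R) Y.
Proof. exact: map_mxM. Qed.

Lemma mapJT m n (X : 'M[C]_(m,n)) :
  map_mx (@conjc R) X^T = (map_mx (@conjc R) X)^T.
Proof. by apply/matrixP => a b; rewrite !mxE. Qed.

Lemma mapJK m n (X : 'M[C]_(m,n)) :
  map_mx (@conjc R) (map_mx (@conjc R) X) = X.
Proof. by apply/matrixP => a b; rewrite !mxE conjcK. Qed.

Lemma mapJE (X : 'M[C]_1) : conjc (X 0 0) = (map_mx (@conjc R) X) 0 0.
Proof. by rewrite mxE. Qed.

Lemma tr11 (X : 'M[C]_1) : X 0 0 = X^T 0 0.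
Proof. by rewrite mxE. Qed.

Lemma conj_quad n (u : 'rV[C]_n) (B : 'M[C]_n) :
  B^T = B -> map_mx (@conjc R) B = B ->
  conjc ((u *m B *m (map_mx (@conjc R) u)^T) 0 0)
  = (u *m B *m (map_mx (@conjc R) u)^T) 0 0.
Proof.
move=> hT hJ.
rewrite mapJE !mapJM mapJT mapJK hJ.
by rewrite tr11 !trmx_mul trmxK hT mulmxA.
Qed.

Lemma sym_unit n (A : 'M[R]_n) (z : C) : A^T = A -> complex.Im z != 0 ->
  (map_mx (fun x : R => (x%:C)%C) A - z%:M) \in unitmx.
Proof.
move=> hA hz.
set Ac := map_mx (fun x : R => (x%:C)%C) A.
set M := Ac - z%:M.
apply: contraT => hM.
have hK : kermx M != 0 by rewrite kermx_eq0 row_free_unit.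
case: (pickP (fun ij : 'I_n * 'I_n => kermx M ij.1 ij.2 != 0)); last first.
  move=> h0; have H0 : kermx M = 0.
    apply/matrixP => a b; have := h0 (a, b); rewrite /= => /negbFE/eqP ->.
    by rewrite mxE.
  by rewrite H0 eqxx in hK.
move=> [i j] /= hij.
set u := row i (kermx M).
have hu : u != 0.
  apply/eqP => hu0; move: hij.
  have -> : kermx M i j = u 0 j by rewrite /u [in RHS]mxE.
  by rewrite hu0 [in X in X != _]mxE eqxx.
have huM : u *m Ac = z *: u.
  have : u *m M = 0 by rewrite /u -row_mul mulmx_ker row0.
  by rewrite /M mulmxBr mul_mx_scalar => /eqP; rewrite subr_eq0 => /eqP.
set w := map_mx (@conjc R) u.
have AcT : Ac^T = Ac by rewrite /Ac map_trmx hA.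
have AcJ : map_mx (@conjc R) Ac = Ac.
  by apply/matrixP => a b; rewrite !mxE conjc_real.
have wJ : map_mx (@conjc R) w = u.
  by apply/matrixP => a b; rewrite !mxE conjcK.
set s := (u *m Ac *m w^T) 0 0.
set N := (u *m w^T) 0 0.
have hs : s = z * N by rewrite /s /N huM -scalemxAl mxE.
have hsJ : conjc s = s by rewrite /s /w conj_quad.
have hNJ : conjc N = N.
  have h1 : map_mx (@conjc R) (1%:M : 'M[C]_n) = 1%:M.
    by apply/matrixP => a b; rewrite !mxE conjc_nat.
  by have := conj_quad u (trmx1 _ _) h1; rewrite mulmx1.
have hN : N != 0.
  apply: contra hu => /eqP hN0.
  have hN' : N = \sum_k u 0 k * conjc (u 0 k).
    by rewrite /N mxE; apply: eq_bigr => k _; rewrite !mxE.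
  apply/eqP/matrixP => a b; rewrite ord1 [RHS]mxE.
  have := psumr_eq0P (P := predT) (F := fun k => u 0 k * conjc (u 0 k)).
  move=> /(_ (fun k _ => mulcJ_ge0 _)).
  rewrite -hN' hN0 => /(_ erefl b erefl) /eqP.
  by rewrite mulf_eq0 conjc_eq0 orbb => /eqP.
have hzJ : conjc z = z.
  have hm : forall x y : C, conjc (x * y) = conjc x * conjc y by move=> x y; exact: rmorphM.
  have := hsJ; rewrite hs hm hNJ => /eqP.
  by rewrite -subr_eq0 -mulrBl mulf_eq0 (negbTE hN) orbF subr_eq0 => /eqP.
suff : complex.Im z == 0 by rewrite (negbTE hz).
have := subcJ z; rewrite hzJ subrr => /esym/eqP.
rewrite !mulf_eq0 => /orP[/orP[h|h]|h].
- by move: h; rewrite pnatr_eq0.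
- by move: h; rewrite eq_complex /= eqxx andbT.
- by move: h; rewrite eq_complex /= oner_eq0 andbF.
Qed.


Lemma ursub_mul m (X Y : 'M[C]_(2 + m)) :
  ursubmx (X *m Y) = ulsubmx X *m ursubmx Y + ursubmx X *m drsubmx Y.
Proof. by rewrite -{1}(submxK X) -{1}(submxK Y) mulmx_block block_mxKur. Qed.

Lemma sub_scal m (X : 'M[C]_(2 + m)) (z : C) :
  ursubmx (X - z%:M) = ursubmx X /\ drsubmx (X - z%:M) = drsubmx X - z%:M /\
  ulsubmx (X - z%:M) = ulsubmx X - z%:M.
Proof.
rewrite -{1 3 5}(submxK X) scalar_mx_block opp_block_mx add_block_mx.
by rewrite block_mxKur block_mxKdr block_mxKul oppr0 addr0.
Qed.

Lemma le_vnorminf q (x : 'cV[C]_q) i : cabs (x i 0) <= vnorminf x.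
Proof. by rewrite /vnorminf (bigD1 i) //= le_max lexx. Qed.


Lemma entry_addsc (E : 'M[C]_2) (v : 'cV[C]_2) (c : C) i :
  ((E + c%:M) *m v) i 0 = (E *m v) i 0 + c * v i 0.
Proof. by rewrite mulmxDl mul_scalar_mx !mxE. Qed.

Lemma key_bound (E : 'M[C]_(2,2)) (v : 'cV[C]_2) (c : C) (d V : R) :
  specnorm E <= d -> 0 <= d -> d <= cabs c / 2%:R -> 1 / 11%:R <= cabs c ->
  (forall i, cabs (((E + c%:M) *m v) i 0) <= V) ->
  forall k, cabs ((E *m v) k 0) <= 66%:R * d * (1 + V).
Proof.
move=> hE hd0 hdc hc hw k.
have hs := spec_bound hE.
set a := cabs c.
set Vm := Num.max (cabs (v 0 0)) (cabs (v 1 0)).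
have hv0 : cabs (v 0 0) <= Vm by rewrite le_max lexx.
have hv1 : cabs (v 1 0) <= Vm by rewrite le_max lexx orbT.
have hVm0 : 0 <= Vm by apply: le_trans hv0; exact: cabs_ge0.
have hv2 : vnorm2 v <= 3%:R / 2%:R * Vm by exact: vnorm2_le_max.
have hEv : vnorm2 (E *m v) <= d * (3%:R / 2%:R * Vm).
  by apply: le_trans (hs v) _; exact: ler_wpM2l.
have each : forall i, a * cabs (v i 0) <= V + d * (3%:R / 2%:R * Vm).
  move=> i.
  have e : c * v i 0 = ((E + c%:M) *m v) i 0 - (E *m v) i 0.
    by rewrite entry_addsc addrC addKr.
  rewrite /a -cabsM e.
  apply: le_trans (cabsB _ _) _; apply: lerD; first exact: hw.
  by apply: le_trans hEv; exact: cabs_le_vnorm2.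
have main : a * Vm <= V + d * (3%:R / 2%:R * Vm).
  have hVmE : Vm = cabs (v 1 0) \/ Vm = cabs (v 0 0).
    by rewrite /Vm; unfold Num.Def.maxr; case: (cabs (v 0 0) < cabs (v 1 0)); [left|right].
  by case: hVmE => e; rewrite {1}e; exact: each.
have p1 : d * Vm <= a / 2%:R * Vm by exact: ler_wpM2r.
have p2 : 1 / 11%:R * Vm <= a * Vm by exact: ler_wpM2r.
have hVm : Vm <= 44%:R * V by lra.
have p3 : d * Vm <= d * (44%:R * V) by exact: ler_wpM2l.
have hV0 : 0 <= V by apply: le_trans (hw 0); exact: cabs_ge0.
apply: le_trans (cabs_le_vnorm2 _ k) _; apply: le_trans hEv _.
have : 0 <= d * V by exact: mulr_ge0.
lra.
Qed.

End H.

Lemma onesB (R : realType) q (Y : 'cV[R[i]]_q) i : (ones R q - Y) i 0 = 1 - Y i 0.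
Proof. by rewrite !mxE. Qed.

Lemma rowE0 (T : Type) p q (X : 'M[T]_(p, q)) i j : (row i X) 0 j = X i j.
Proof. by rewrite mxE. Qed.

Lemma usubE (T : Type) p q r (X : 'M[T]_(p + q, r)) i j : X (lshift q i) j = (usubmx X) i j.
Proof. by rewrite mxE. Qed.

Lemma subscE (R : realType) (X : 'M[R[i]]_2) (v : 'cV[R[i]]_2) c i :
  (X *m v) i 0 - c * v i 0 = ((X - c%:M) *m v) i 0.
Proof. by rewrite mulmxBl mul_scalar_mx !mxE. Qed.

Unset Implicit Arguments.

Theorem lemma5p2 (R : realType) :
  exists Cst : R, 0 < Cst /\
  forall (m : nat) (A : 'M[R]_(2 + m)) (z : R[i]) (delta : R),
    (1 <= m)%N ->
    A^T = A ->
    complex.Im z != 0 ->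
    cabs z <= 10%:R ->
    0 <= delta ->
    delta <= m0_inf R / 2%:R ->
    specnorm (ulsubmx (resolvent A z) - (m0 z)%:M) <= delta ->
    forall k : 'I_2,
      cabs ((resolvent A z *m ones R (2 + m)) (lshift m k) ord0
            - m0 z * (1 - (map_mx (fun x : R => (x%:C)%C) (row k (ursubmx A))
                             *m resolvent (drsubmx A) z *m ones R m) ord0 ord0))
      <= Cst * delta * (1 + vnorminf (resolvent A z *m ones R (2 + m))).
Proof.
exists 66%:R; split; first by rewrite ltr0n.
move=> m A z delta hm hA hz hz10 hd0 hdinf hspec k.
set Ac := map_mx (fun x : R => (x%:C)%C) A.
have hMu : (Ac - z%:M) \in unitmx := sym_unit hA hz.
have hD : (drsubmx A)^T = drsubmx A by rewrite trmx_drsub hA.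
have hDu := sym_unit hD hz.
set G := resolvent A z.
set Rp := resolvent (drsubmx A) z.
have hGM : G *m (Ac - z%:M) = 1%:M by rewrite /G /resolvent mulVmx.
have [hur [hdr _]] := sub_scal Ac z.
have hAcD : drsubmx Ac = map_mx (fun x : R => (x%:C)%C) (drsubmx A) by rewrite /Ac map_drsubmx.
have hAc12 : ursubmx Ac = map_mx (fun x : R => (x%:C)%C) (ursubmx A) by rewrite /Ac map_ursubmx.
set B := map_mx (fun x : R => (x%:C)%C) (ursubmx A).
have hG12 : ursubmx G = - (ulsubmx G *m B *m Rp).
  have := congr1 ursubmx hGM.
  rewrite ursub_mul hur hdr hAcD hAc12.
  have -> : ursubmx (1%:M : 'M[R[i]]_(2+m)) = 0 by rewrite scalar_mx_block block_mxKur.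
  move/eqP; rewrite addr_eq0 => /eqP h.
  have := congr1 (fun X => X *m Rp) h => /=.
  by rewrite mulNmx /Rp /resolvent (mulmxK hDu) => ->; rewrite opprK.
set v := ones R 2 - B *m Rp *m ones R m.
have htop : usubmx (G *m ones R (2 + m)) = ulsubmx G *m v.
  rewrite -mul_usub_mx -[usubmx G]hsubmxK.
  rewrite /ones -col_mx_const mul_row_col.
  rewrite -/(ulsubmx G) -/(ursubmx G) hG12 /v mulmxBr !mulmxA mulNmx.
  done.
rewrite usubE htop map_row -!row_mul rowE0 -/B -(onesB (B *m Rp *m ones R m)) -/v.
rewrite subscE.
have hm0 := m0_lb hz10.
have hinf : m0_inf R <= cabs (m0 z).
  apply: ge_inf; last first.
    exists z; split; last by [].
    
    by case => hI _; move: hz; rewrite hI eqxx.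
  by exists 0 => r [w [_ [_ ->]]]; exact: cabs_ge0.
apply: (@key_bound _ _ _ (m0 z) _ _ hspec hd0) => //.
  by apply: le_trans hdinf _; rewrite ler_pM2r ?invr_gt0 ?ltr0n.
move=> i; rewrite subrK -htop -usubE.
exact: le_vnorminf.
Qed.
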